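(* Let $F$ be a vector lattice with positive cone $F_{+}$. Suppose we are given a rule (''adjudicator'') declaring, for some nets $(f_\alpha)$ in $F_{+}$, that $f_\alpha\to 0_F$, such that at least one net in $F_+$ is declared convergent to $0_F$ and such that: (1) every quasi-subnet of a net in $F_+$ converging to $0_F$ converges to $0_F$; (2) if $(f_{\alpha})_{\alpha\in A}\subset F_{+}$ converges to $0_{F}$ and $(g_\alpha)_{\alpha\in A}$ satisfies $0_{F}\le g_{\alpha}\le f_{\alpha}$ for every $\alpha\in A$, then $g_{\alpha}\to 0_{F}$; (3) if $f_{\alpha}\to 0_{F}$ and $g_{\alpha}\to 0_{F}$ (nets in $F_+$ over the same index set), then $f_{\alpha}+g_{\alpha}\to 0_{F}$. Define, for a net $(f_\alpha)$ in $F$ and $f\in F$, $f_{\alpha}\to f$ iff $|f_{\alpha}-f|\to 0_{F}$. Then this is a locally solid additive convergence structure on $F$. Moreover, it is a locally solid linear convergence if and only if the sequence $\left(\frac{1}{n}f\right)_{n\in\mathbb N}$ converges to $0_{F}$ for every $f\in F_{+}$.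
   Context: A net $(y_\beta)_{\beta\in B}$ is a quasi-subnet of a net $(x_\alpha)_{\alpha\in A}$ if for every $\alpha_0\in A$ there is $\beta_0\in B$ with $\{y_\beta\}_{\beta\ge\beta_0}\subset\{x_\alpha\}_{\alpha\ge\alpha_0}$. A (net) convergence structure on a set $X$ is a rule deciding which nets converge to which points such that: every constant net converges to its value; every quasi-subnet of a net converging to $x$ converges to $x$; if $x_\alpha\to x$, $y_\alpha\to x$ and $z_\alpha\in\{x_\alpha,y_\alpha\}$ for every $\alpha$, then $z_\alpha\to x$. Continuity of a map means it sends convergent nets to nets converging to the image of the limit; on products, $(x_\alpha,y_\alpha)\to(x,y)$ iff $x_\alpha\to x$ and $y_\alpha\to y$. A convergence structure on a vector lattice $F$ is locally solid additive if addition $F\times F\to F$ and $f\mapsto -f$ are continuous and whenever $|e_\alpha|\le|f_\alpha|$ for all $\alpha$ and $f_\alpha\to 0_F$, then $e_\alpha\to0_F$. It is locally solid linear if moreover scalar multiplication $F\times\mathbb R\to F$ is continuous (with the usual convergence on $\mathbb R$). *)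

(* Defs.v *)
From HB Require Import structures.
From mathcomp Require Import all_boot all_order all_algebra.
From mathcomp Require Import reals.
Set Implicit Arguments. Unset Strict Implicit. Unset Printing Implicit Defensive.
Import Order.TTheory GRing.Theory Num.Theory.
Local Open Scope ring_scope.

Record dirset := DirSet {
  dcar :> Type;
  dle : dcar -> dcar -> Prop;
  dle_refl : forall a, dle a a;
  dle_trans : forall a b c, dle a b -> dle b c -> dle a c;
  dle_dir : forall a b, exists c, dle a c /\ dle b c;
  dne : inhabited dcar }.

Lemma nat_dir (a b : nat) : exists c, (a <= c)%N /\ (b <= c)%N.
Proof. exists (maxn a b); split; [exact: leq_maxl | exact: leq_maxr]. Qed.
Definition natdir : dirset :=
  @DirSet nat (fun a b => is_true (a <= b)%N) leqnn
    (fun a b c h1 h2 => leq_trans h1 h2) nat_dir (inhabits 0%N).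

Definition quasi_subnet (X : Type) (A B : dirset) (y : B -> X) (x : A -> X) :=
  forall a0 : A, exists b0 : B, forall b : B, dle b0 b ->
    exists a : A, dle a0 a /\ y b = x a.

(* A (net) convergence relation on X: conv A x l means x -> l. *)
Definition convergence (X : Type) := forall A : dirset, (A -> X) -> X -> Prop.

Definition is_convergence_structure (X : Type) (conv : convergence X) :=
  [/\ (forall (A : dirset) (l : X), conv A (fun _ => l) l),
      (forall (A B : dirset) (x : A -> X) (y : B -> X) (l : X),
          conv A x l -> quasi_subnet y x -> conv B y l) &
      (forall (A : dirset) (x y z : A -> X) (l : X),
          conv A x l -> conv A y l -> (forall a, z a = x a \/ z a = y a) ->
          conv A z l)].

Record vector_lattice (R : realType) (F : lmodType R)
    (le : F -> F -> Prop) (join : F -> F -> F) : Prop := {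
  vl_refl : forall x, le x x;
  vl_trans : forall x y z, le x y -> le y z -> le x z;
  vl_antisym : forall x y, le x y -> le y x -> x = y;
  vl_add : forall x y z, le x y -> le (x + z) (y + z);
  vl_scale : forall (t : R) x, 0 <= t -> le 0 x -> le 0 (t *: x);
  vl_join_ubl : forall x y, le x (join x y);
  vl_join_ubr : forall x y, le y (join x y);
  vl_join_least : forall x y z, le x z -> le y z -> le (join x y) z }.

Definition vabs (R : realType) (F : lmodType R) (join : F -> F -> F) (f : F) :=
  join f (- f).

Definition Rconv (R : realType) (A : dirset) (t : A -> R) (t0 : R) :=
  forall eps : R, 0 < eps -> exists a0 : A, forall a : A, dle a0 a ->
    `|t a - t0| < eps.

Definition locally_solid_additive (R : realType) (F : lmodType R)
    (le : F -> F -> Prop) (join : F -> F -> F) (conv : convergence F) :=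
  [/\ (forall (A : dirset) (x y : A -> F) (f g : F),
         conv A x f -> conv A y g -> conv A (fun a => x a + y a) (f + g)),
      (forall (A : dirset) (x : A -> F) (f : F),
         conv A x f -> conv A (fun a => - x a) (- f)) &
      (forall (A : dirset) (e f : A -> F),
         (forall a, le (vabs join (e a)) (vabs join (f a))) ->
         conv A f 0 -> conv A e 0)].

Definition locally_solid_linear (R : realType) (F : lmodType R)
    (le : F -> F -> Prop) (join : F -> F -> F) (conv : convergence F) :=
  locally_solid_additive le join conv /\
  (forall (A : dirset) (x : A -> F) (t : A -> R) (f : F) (t0 : R),
     conv A x f -> Rconv t t0 -> conv A (fun a => t a *: x a) (t0 *: f)).

Definition induced_conv (R : realType) (F : lmodType R) (join : F -> F -> F)
    (adj : forall A : dirset, (A -> F) -> Prop) : convergence F :=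
  fun A x f => adj A (fun a => vabs join (x a - f)).
Arguments induced_conv {R F} join adj A x f.

(* Main.v *)
Require Import Defs.
From mathcomp Require Import all_boot all_order all_algebra.
From mathcomp Require Import reals.
From Stdlib Require Import ClassicalEpsilon FunctionalExtensionality.
Set Implicit Arguments. Unset Strict Implicit.
Import Order.TTheory GRing.Theory Num.Theory.
Local Open Scope ring_scope.

Section VL.
Variables (R : realType) (F : lmodType R) (le : F -> F -> Prop) (join : F -> F -> F).
Hypothesis VL : vector_lattice le join.
Local Notation ab := (vabs join).
Let tr x y z : le x y -> le y z -> le x z := @vl_trans _ _ _ _ VL x y z.

Lemma le_add2 a b c d : le a b -> le c d -> le (a + c) (b + d).
Proof.
move=> h1 h2; apply: (@tr _ (b + c)); first exact: (vl_add VL).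
by rewrite ![b + _]addrC; apply: (vl_add VL).
Qed.

Lemma le_subr a b : le a b -> le 0 (b - a).
Proof. by move=> h; have := vl_add VL (- a) h; rewrite subrr. Qed.

Lemma le_subl a b : le 0 (b - a) -> le a b.
Proof. by move=> h; have := vl_add VL a h; rewrite add0r subrK. Qed.

Lemma le_opp a b : le a b -> le (- b) (- a).
Proof.
move=> h; apply: le_subl; rewrite opprK addrC; exact: le_subr.
Qed.

Lemma le_scale t u v : 0 <= t -> le u v -> le (t *: u) (t *: v).
Proof.
move=> t0 h; apply: le_subl; rewrite -scalerBr; apply: vl_scale VL _ _ t0 _.
exact: le_subr.
Qed.

Lemma le_scalar s c v : s <= c -> le 0 v -> le (s *: v) (c *: v).
Proof.
move=> h v0; apply: le_subl; rewrite -scalerBl; apply: vl_scale VL _ _ _ v0.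
by rewrite subr_ge0.
Qed.

Lemma abs_ger u : le u (ab (u)). Proof. exact: (vl_join_ubl VL). Qed.
Lemma abs_gen u : le (- u) (ab (u)). Proof. exact: (vl_join_ubr VL). Qed.

Lemma abs_ge0 u : le 0 (ab (u)).
Proof.
have h := le_add2 (abs_ger u) (abs_gen u); rewrite subrr in h.
have H2 : 0 <= (2:R)^-1 by rewrite invr_ge0 ler0n.
have := @vl_scale _ _ _ _ VL 2^-1 ((ab u) + (ab u)) H2 h.
rewrite -[X in X + X]scale1r -scalerDl scalerA mulVf ?scale1r //.
by rewrite pnatr_eq0.
Qed.

Lemma abs_id v : le 0 v -> (ab v) = v.
Proof.
move=> h; apply: (vl_antisym VL); last exact: abs_ger.
apply: (vl_join_least VL); first exact: (vl_refl VL).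
apply: (tr _ h); have := le_opp h; by rewrite oppr0.
Qed.

Lemma abs0 : (ab 0) = 0. Proof. apply: abs_id; exact: (vl_refl VL). Qed.

Lemma join_comm u v : join u v = join v u.
Proof.
by apply: (vl_antisym VL); apply: (vl_join_least VL);
  first [exact: (vl_join_ubl VL) | exact: (vl_join_ubr VL)].
Qed.

Lemma abs_opp u : (ab (- u)) = (ab u).
Proof. by rewrite /vabs opprK join_comm. Qed.

Lemma abs_tri u v : le (ab (u + v)) ((ab u) + (ab v)).
Proof.
apply: (vl_join_least VL); first exact: le_add2 (abs_ger u) (abs_ger v).
rewrite opprD; exact: le_add2 (abs_gen u) (abs_gen v).
Qed.

Lemma abs_scale t u : le (ab (t *: u)) (`|t| *: (ab u)).
Proof.
have [t0|t0] := leP 0 t.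
  rewrite ger0_norm //; apply: (vl_join_least VL); first exact: le_scale (abs_ger u).
  rewrite -scalerN; exact: le_scale (abs_gen u).
have nt : 0 <= - t by rewrite oppr_ge0 ltW.
rewrite ltr0_norm //; apply: (vl_join_least VL).
  have -> : t *: u = - t *: - u by rewrite scaleNr scalerN opprK.
  exact: le_scale nt (abs_gen u).
rewrite -scaleNr; exact: le_scale nt (abs_ger u).
Qed.

End VL.
Section PD.
Variable A : dirset.
Let pl (p q : A * nat) := dle p.1 q.1 /\ (p.2 <= q.2)%N.
Lemma pl_refl p : pl p p. Proof. split; [exact: dle_refl | exact: leqnn]. Qed.
Lemma pl_trans p q r : pl p q -> pl q r -> pl p r.
Proof. move=> [h1 h2] [h3 h4]; split; [exact: dle_trans h1 h3 | exact: leq_trans h2 h4]. Qed.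
Lemma pl_dir p q : exists r, pl p r /\ pl q r.
Proof.
case: (dle_dir p.1 q.1) => c [c1 c2]; exists (c, maxn p.2 q.2).
by split; split => //=; [exact: leq_maxl | exact: leq_maxr].
Qed.
Lemma pl_ne : inhabited (A * nat).
Proof. case: (dne A) => a; exact: inhabits (a, 0%N). Qed.
Definition pdir : dirset := @DirSet (A * nat) pl pl_refl pl_trans pl_dir pl_ne.
End PD.

Section ADJ.
Variables (R : realType) (F : lmodType R) (le : F -> F -> Prop) (join : F -> F -> F).
Hypothesis VL : vector_lattice le join.
Local Notation ab := (vabs join).
Variable adj : forall A : dirset, (A -> F) -> Prop.
Hypothesis Hpos : forall {A : dirset} {f : A -> F}, adj f -> forall a, le 0 (f a).
Hypothesis Hex : exists (A : dirset) (f : A -> F), adj f.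
Hypothesis Hqs : forall {A B : dirset} {f : A -> F} {g : B -> F},
      adj f -> (forall b, le 0 (g b)) -> quasi_subnet g f -> adj g.
Hypothesis Hdom : forall {A : dirset} {f g : A -> F},
      adj f -> (forall a, le 0 (g a) /\ le (g a) (f a)) -> adj g.
Hypothesis Hadd : forall {A : dirset} {f g : A -> F},
      adj f -> adj g -> adj (fun a => f a + g a).

Lemma adj_const0 (A : dirset) : adj (fun _ : A => 0).
Proof.
case: Hex => B [f hf].
have h0 : adj (fun _ : B => 0).
  apply: (Hdom hf) => b; split; [exact: (vl_refl VL) | exact: Hpos hf b].
apply: (Hqs h0) => [a|]; first exact: (vl_refl VL).
move=> b0; case: (dne A) => a; exists a => a' _; exists b0; split => //.
exact: dle_refl.
Qed.

Lemma adj_le (A : dirset) (f g : A -> F) : adj f -> (forall a, le 0 (g a)) ->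
  (forall a, le (g a) (f a)) -> adj g.
Proof. by move=> hf h1 h2; apply: (Hdom hf) => a; split. Qed.

Lemma adj_ev (A : dirset) (f g : A -> F) : adj f -> (forall a, le 0 (g a)) ->
  (exists a1, forall a, dle a1 a -> le (g a) (f a)) -> adj g.
Proof.
move=> hf hg [a1 ha1].
pose h a := if excluded_middle_informative (dle a1 a) then g a else 0.
have hh : adj h.
  apply: (Hdom hf) => a; rewrite /h; case: excluded_middle_informative => H; split.
  - exact: hg.
  - exact: ha1.
  - exact: (vl_refl VL).
  - exact: Hpos hf a.
apply: (Hqs hh hg) => a0.
case: (dle_dir a0 a1) => c [c1 c2]; exists c => b hb; exists b; split.
  exact: dle_trans c1 hb.
rewrite /h; case: excluded_middle_informative => // H; exfalso; apply: H.
exact: dle_trans c2 hb.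
Qed.

Lemma adj_muln (A : dirset) (f : A -> F) n : adj f -> adj (fun a => f a *+ n).
Proof.
move=> hf; elim: n => [|n IH].
  apply: (adj_le hf) => a; rewrite mulr0n; [exact: (vl_refl VL) | exact: (Hpos hf)].
have -> : (fun a => f a *+ n.+1) = (fun a => f a + f a *+ n).
  by apply: functional_extensionality => a; rewrite mulrS.
exact: Hadd.
Qed.


Let cv := induced_conv join adj.

Lemma le_addr' u v : le 0 v -> le u (u + v).
Proof. move=> h; have := vl_add VL u h; by rewrite add0r addrC. Qed.

Lemma le_addl' u v : le 0 v -> le u (v + u).
Proof. move=> h; have := vl_add VL u h; by rewrite add0r. Qed.

Lemma cs_part : is_convergence_structure cv.
Proof.
split.
- move=> A l; rewrite /cv /induced_conv subrr (abs0 VL); exact: adj_const0.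
- move=> A B x y l hx hq; apply: (Hqs hx) => [b|]; first exact: abs_ge0.
  move=> a0; case: (hq a0) => b0 hb; exists b0 => b /hb [a [ha e]].
  by exists a; split => //; rewrite e.
- move=> A x y z l hx hy hz; apply: (adj_le (Hadd hx hy)) => a; first exact: abs_ge0.
  case: (hz a) => -> /=;
  [apply: le_addr' | apply: le_addl']; exact: (abs_ge0 VL).
Qed.

Lemma lsa_part : locally_solid_additive le join cv.
Proof.
split.
- move=> A x y f g hx hy; apply: (adj_le (Hadd hx hy)) => a; first exact: abs_ge0.
  have -> : x a + y a - (f + g) = (x a - f) + (y a - g) by rewrite opprD addrACA.
  exact: abs_tri.
- move=> A x f hx; rewrite /cv /induced_conv.
  have -> : (fun a => vabs join (- x a - - f)) = (fun a => vabs join (x a - f)).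
    by apply: functional_extensionality => a; rewrite -opprD (abs_opp VL).
  exact: hx.
- move=> A e f h hf; rewrite /cv /induced_conv.
  have -> : (fun a => vabs join (e a - 0)) = (fun a => vabs join (e a)).
    by apply: functional_extensionality => a; rewrite subr0.
  apply: (adj_le hf) => a; first exact: abs_ge0.
  by rewrite subr0.
Qed.

Lemma ltr' x y z : le x y -> le y z -> le x z.
Proof. exact: (@vl_trans _ _ _ _ VL x y z). Qed.

Lemma Rconv_inv : Rconv (A:=natdir) (fun n : nat => (n.+1%:R)^-1 : R) 0.
Proof.
move=> eps e0; exists (Num.truncn eps^-1) => n hn /=.
rewrite subr0 ger0_norm ?invr_ge0 ?ler0n //.
rewrite invf_plt ?posrE ?ltr0Sn //.
apply: lt_le_trans (truncnS_gt _) _; by rewrite ler_nat ltnS.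
Qed.

Lemma lin_imp : locally_solid_linear le join cv ->
  forall f, le 0 f -> induced_conv join adj natdir (fun n : nat => (n.+1%:R)^-1 *: f) 0.
Proof.
move=> [_ hl] f f0; case: cs_part => hc _ _.
have := hl natdir (fun _ => f) (fun n : nat => (n.+1%:R)^-1) f 0 (hc natdir f) Rconv_inv.
by rewrite scale0r.
Qed.

Hypothesis H : forall f : F, le 0 f ->
  induced_conv join adj natdir (fun n : nat => (n.+1%:R)^-1 *: f) 0.

Lemma adj_small (A : dirset) (d : A -> R) u : le 0 u -> Rconv d 0 ->
  (forall a, 0 <= d a) -> adj (fun a => d a *: u).
Proof.
move=> u0 hd d0.
have s0 n : le 0 (((n.+1)%:R : R)^-1 *: u).
  by apply: (vl_scale VL) => //; rewrite invr_ge0 ler0n.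
have hs : adj (fun n : natdir => (n.+1%:R)^-1 *: u).
  have := H u0; rewrite /induced_conv.
  have -> : (fun n : natdir => ab ((n.+1%:R)^-1 *: u - 0)) = (fun n => (n.+1%:R)^-1 *: u) by
    apply: functional_extensionality => n; rewrite subr0 (abs_id VL).
  done.
pose k (p : A * nat) : nat := if d p.1 == 0 then p.2 else (Num.truncn (d p.1)^-1).-1.
pose w (p : pdir A) := ((k p).+1%:R)^-1 *: u.
have hw : adj w.
  apply: (Hqs hs) => [p|]; first exact: s0.
  move=> n0; have e0 : 0 < ((n0.+1%:R : R)^-1) by rewrite invr_gt0 ltr0Sn.
  case: (hd _ e0) => a0 ha0; exists (a0, n0) => -[a m] [/= h1 h2].
  exists (k (a,m)); split; last by [].
  rewrite /= /k /=; case: eqP => [_|dn0] //.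
  have := ha0 a h1; rewrite subr0 ger0_norm // => hlt.
  have dpos : 0 < d a by rewrite lt_neqAle eq_sym d0 andbT; apply/eqP.
  rewrite invf_pgt ?posrE ?ltr0Sn // in hlt.
  have ht : (n0.+1 <= Num.truncn (d a)^-1)%N.
    by rewrite truncn_ge_nat ?invr_ge0 ?ltW.
  by rewrite -ltnS (ltn_predK ht).
have hg' : adj (fun p : pdir A => d p.1 *: u).
  case: (hd 1 ltr01) => a1 ha1.
  apply: (adj_ev hw) => [p|]; first exact: (vl_scale VL).
  exists (a1, 0%N) => -[a m] [/= h1 _]; rewrite /w /k /=.
  case: eqP => [->|dn0]; first by rewrite scale0r; exact: s0.
  apply: (le_scalar VL) => //.
  have := ha1 a h1; rewrite subr0 ger0_norm // => hlt.
  have dpos : 0 < d a by rewrite lt_neqAle eq_sym d0 andbT; apply/eqP.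
  have ht : (0 < Num.truncn (d a)^-1)%N by rewrite truncn_gt0 invf_ge1 ?ltW.
  rewrite (ltn_predK ht) invf_pge ?posrE ?ltr0n //.
  by rewrite truncn_le invr_ge0 ltW.
apply: (Hqs hg') => [a|]; first exact: (vl_scale VL).
move=> -[a0 n0]; exists a0 => b hb; exists (b, n0); split => //.
Qed.

Lemma imp_lin : locally_solid_linear le join cv.
Proof.
split; first exact: lsa_part.
move=> A x t f t0 hx ht; rewrite /cv /induced_conv.
pose N := (Num.truncn (`|t0| + 1)).+1.
have hN : `|t0| + 1 <= N%:R by apply: ltW; exact: truncnS_gt.
have hT2 : adj (fun a => `|t a - t0| *: ab f).
  apply: adj_small => //; first exact: (abs_ge0 VL).
  move=> e e0; case: (ht e e0) => a0 h; exists a0 => a /h.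
  by rewrite subr0 normr_id.
have hS := Hadd (adj_muln N hx) hT2.
case: (ht 1 ltr01) => a1 ha1.
apply: (adj_ev hS) => [a|]; first exact: (abs_ge0 VL).
exists a1 => a /ha1 h1 /=.
have -> : t a *: x a - t0 *: f = t a *: (x a - f) + (t a - t0) *: f.
  by rewrite scalerBr scalerBl addrA subrK.
apply: (ltr' (abs_tri VL _ _)).
apply: (le_add2 VL).
  apply: (ltr' (abs_scale VL _ _)).
  rewrite -scaler_nat; apply: (le_scalar VL); last exact: (abs_ge0 VL).
  apply: le_trans hN.
  apply: (@le_trans _ _ (`|t a - t0| + `|t0|)).
    by rewrite -[X in `|X| <= _](subrK t0) ler_normD.
  by rewrite addrC lerD2l ltW.
exact: (abs_scale VL).
Qed.

End ADJ.

Unset Implicit Arguments.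
Theorem theorem2p1 (R : realType) (F : lmodType R)
    (le : F -> F -> Prop) (join : F -> F -> F)
    (adj : forall A : dirset, (A -> F) -> Prop) :
  vector_lattice le join ->
  (* the adjudicator only declares nets in F_+ *)
  (forall (A : dirset) (f : A -> F), adj A f -> forall a, le 0 (f a)) ->
  (exists (A : dirset) (f : A -> F), adj A f) ->
  (forall (A B : dirset) (f : A -> F) (g : B -> F),
      adj A f -> (forall b, le 0 (g b)) -> quasi_subnet g f -> adj B g) ->
  (forall (A : dirset) (f g : A -> F),
      adj A f -> (forall a, le 0 (g a) /\ le (g a) (f a)) -> adj A g) ->
  (forall (A : dirset) (f g : A -> F),
      adj A f -> adj A g -> adj A (fun a => f a + g a)) ->
  [/\ is_convergence_structure (induced_conv join adj),
      locally_solid_additive le join (induced_conv join adj) &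
      (locally_solid_linear le join (induced_conv join adj) <->
       (forall f : F, le 0 f ->
          induced_conv join adj natdir (fun n : nat => (n.+1%:R)^-1 *: f) 0))].
Proof.
move=> VL Hpos Hex Hqs Hdom Hadd; split.
- by eapply cs_part; eauto.
- by eapply lsa_part; eauto.
- split; first by eapply lin_imp; eauto.
  move=> H; by eapply imp_lin; eauto.
Qed.
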